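(* Let $K$ be an infinite commutative domain, let $n\ge0$, and let $W_n$ be the $K$-submodule of the free associative algebra $K\langle x,y\rangle$ with basis the monomials $y^ixy^j$, $i+j=n$. Let $\alpha\in W_n$. (i) $\Delta\alpha=0$ if and only if $\alpha$ is a $K$-scalar multiple of $e_n$. (ii) If $\operatorname{char}K=0$ then $\partial\alpha/\partial y=0$ if and only if $\alpha$ is a $K$-scalar multiple of $e_n$.
   Context: Let $V$ be the $K$-submodule of $K\langle x,y\rangle$ spanned by all monomials $y^ixy^j$, $i,j\ge0$. The difference operator $\Delta$ on $V$ is $\Delta\alpha(x,y)=\alpha(x,y+1)-\alpha(x,y)$ (computed in the unital free algebra). $\partial/\partial y$ denotes the unique $K$-derivation of $K\langle x,y\rangle$ sending $y\mapsto1$ and $x\mapsto0$. $e_0=x$, $e_{j+1}=e_jy-ye_j$, so $e_n=\sum_{i=0}^n(-1)^i\binom ni y^ixy^{n-i}$. *)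

(* Defs.v *)
(* A concrete model of the free associative algebra K<x,y>:
   an element is a formal finite K-linear combination of words over {x,y}
   (a list of (coefficient, word) pairs); two such combinations denote the
   same element iff all their word-coefficients agree ([feq]). *)
From HB Require Import structures.
From mathcomp Require Import all_boot all_order all_algebra.
Set Implicit Arguments. Unset Strict Implicit. Unset Printing Implicit Defensive.
Import Order.TTheory GRing.Theory Num.Theory.
Local Open Scope ring_scope.

(* letters: true = x, false = y *)
Definition word := seq bool.

Section FreeAlg.
Variable K : comNzRingType.

Definition fsum := seq (K * word).

Definition coef (f : fsum) (w : word) : K :=
  \sum_(p <- f) (if p.2 == w then p.1 else 0).

Definition feq (f g : fsum) : Prop := forall w, coef f w = coef g w.

Definition fadd (f g : fsum) : fsum := f ++ g.
Definition fscale (c : K) (f : fsum) : fsum := [seq (c * p.1, p.2) | p <- f].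
Definition fmul (f g : fsum) : fsum :=
  [seq (p.1 * q.1, p.2 ++ q.2) | p <- f, q <- g].
Definition fone : fsum := [:: (1, [::])].
Definition fx : fsum := [:: (1, [:: true])].
Definition fy : fsum := [:: (1, [:: false])].

Definition linext (h : word -> fsum) (f : fsum) : fsum :=
  flatten [seq fscale p.1 (h p.2) | p <- f].

Fixpoint shift_word (w : word) : fsum :=
  match w with
  | [::] => fone
  | b :: w' => fmul (if b then fx else fadd fy fone) (shift_word w')
  end.

Definition shiftY (f : fsum) : fsum := linext shift_word f.

Definition Delta (f : fsum) : fsum := fadd (shiftY f) (fscale (-1) f).

Fixpoint dy_word (w : word) : fsum :=
  match w with
  | [::] => [::]
  | b :: w' => fadd (if b then [::] else [:: (1, w')])
                    (fmul [:: (1, [:: b])] (dy_word w'))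
  end.

Definition dy (f : fsum) : fsum := linext dy_word f.

Definition mono (i j : nat) : word := nseq i false ++ true :: nseq j false.

Definition in_W (n : nat) (f : fsum) : Prop :=
  exists a : 'I_n.+1 -> K,
    feq f [seq (a i, mono i (n - i)) | i <- enum 'I_n.+1].

Fixpoint e (n : nat) : fsum :=
  match n with
  | 0 => fx
  | n'.+1 => fadd (fmul (e n') fy) (fscale (-1) (fmul fy (e n')))
  end.

Definition is_zero (f : fsum) : Prop := forall w, coef f w = 0.

End FreeAlg.

(* Main.v *)
Require Import Defs.
From HB Require Import structures.
From mathcomp Require Import all_boot all_order all_algebra.
From mathcomp Require Import ring.
Set Implicit Arguments. Unset Strict Implicit. Unset Printing Implicit Defensive.
Import Order.TTheory GRing.Theory Num.Theory.
Local Open Scope ring_scope.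

Section Basic.
Variable K : comNzRingType.
Implicit Types (f g : fsum K) (w v : word).

Lemma coef_nil w : coef (K:=K) [::] w = 0.
Proof. by rewrite /coef big_nil. Qed.

Lemma coef_cons p f w : coef (p :: f) w = (if p.2 == w then p.1 else 0) + coef f w.
Proof. by rewrite /coef big_cons. Qed.

Lemma coef_cat f g w : coef (f ++ g) w = coef f w + coef g w.
Proof. by rewrite /coef big_cat. Qed.

Lemma coef_scale c f w : coef (fscale c f) w = c * coef f w.
Proof.
elim: f => [|p f IH]; first by rewrite /fscale /= !coef_nil mulr0.
rewrite /fscale /= coef_cons -/(fscale c f) IH coef_cons /= mulrDr.
by case: (p.2 == w); rewrite ?mulr0.
Qed.

Lemma coef_linext h f w : coef (linext h f) w = \sum_(p <- f) p.1 * coef (h p.2) w.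
Proof.
elim: f => [|p f IH]; first by rewrite /linext /= coef_nil big_nil.
by rewrite /linext /= coef_cat -/(linext h f) IH coef_scale big_cons.
Qed.

Lemma coef_fmul_cat f1 f2 g w :
  coef (fmul (f1 ++ f2) g) w = coef (fmul f1 g) w + coef (fmul f2 g) w.
Proof. by rewrite /fmul allpairs_cat coef_cat. Qed.

Lemma coef_fmul_letter c b g w :
  coef (fmul [:: (c, [:: b])] g) w =
  match w with b' :: w' => if b' == b then c * coef g w' else 0 | [::] => 0 end.
Proof.
rewrite /fmul /= cats0.
elim: g w => [|q g IH] w; first by rewrite /= coef_nil; case: w => // b' w'; rewrite coef_nil mulr0 if_same.
rewrite /= coef_cons IH /=; case: w => [|b' w'] /=; first by rewrite add0r.
rewrite eqseq_cons coef_cons eq_sym.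
by case: (b' == b); rewrite /= ?mulrDr ?add0r //; case: (q.2 == w'); rewrite ?mulr0.
Qed.

Lemma coef_fmul_one g w : coef (fmul (fone K) g) w = coef g w.
Proof.
rewrite /fmul /= cats0.
elim: g => [|q g IH]; first by rewrite /= !coef_nil.
by rewrite /= !coef_cons IH /= mul1r.
Qed.

Lemma coef_fmul_fy_r_nil f : coef (fmul f (fy K)) [::] = 0.
Proof.
elim: f => [|p f IH]; first by rewrite coef_nil.
rewrite -cat1s coef_fmul_cat IH /fmul /= coef_cons coef_nil !addr0.
by case: p.2.
Qed.

Lemma coef_fmul_fy_r f w b :
  coef (fmul f (fy K)) (rcons w b) = if b then 0 else coef f w.
Proof.
elim: f => [|p f IH]; first by rewrite !coef_nil if_same.
rewrite -cat1s coef_fmul_cat IH /fmul /= !coef_cons coef_nil addr0 /= mulr1 cats1 eqseq_rcons.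
by clear IH; case: b; rewrite ?andbF ?andbT ?add0r ?addr0.
Qed.


Lemma coef_sh_true w v : coef (shift_word K (true :: w)) v =
  match v with b :: v' => if b then coef (shift_word K w) v' else 0 | [::] => 0 end.
Proof. by rewrite /= coef_fmul_letter; case: v => // [[]] v' //=; rewrite mul1r. Qed.

Lemma coef_sh_false w v : coef (shift_word K (false :: w)) v =
  match v with b :: v' => if b then 0 else coef (shift_word K w) v' | [::] => 0 end
  + coef (shift_word K w) v.
Proof.
have -> : shift_word K (false :: w) = fmul (fy K ++ fone K) (shift_word K w) by [].
rewrite coef_fmul_cat coef_fmul_letter coef_fmul_one.
by case: v => // [[]] v' //=; rewrite mul1r.
Qed.

Lemma coef_dy_true w v : coef (dy_word K (true :: w)) v =
  match v with b :: v' => if b then coef (dy_word K w) v' else 0 | [::] => 0 end.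
Proof. by rewrite /= coef_fmul_letter; case: v => // [[]] v' //=; rewrite mul1r. Qed.

Lemma coef_dy_false w v : coef (dy_word K (false :: w)) v =
  (if w == v then 1 else 0) +
  match v with b :: v' => if b then 0 else coef (dy_word K w) v' | [::] => 0 end.
Proof.
have -> : dy_word K (false :: w) = [:: (1, w)] ++ fmul [:: (1, [:: false])] (dy_word K w) by [].
rewrite coef_cat coef_fmul_letter coef_cons coef_nil addr0 /=.
by case: v => // [[]] v' //=; rewrite mul1r.
Qed.

End Basic.

Fixpoint dec (w : word) : option (nat * nat) :=
  match w with
  | [::] => None
  | true :: w' => if has id w' then None else Some (0%N, size w')
  | false :: w' => omap (fun pr => (pr.1.+1, pr.2)) (dec w')
  end.

Lemma dec_mono p r : dec (mono p r) = Some (p, r).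
Proof.
elim: p => [|p IH] /=; first by rewrite has_nseq andbF size_nseq.
by rewrite IH.
Qed.

Lemma decK w p r : dec w = Some (p, r) -> w = mono p r.
Proof.
elim: w p r => [|[] w IH] p r //=.
  by case: ifP => // /negbT hw [<- <-]; rewrite /mono /=; congr (_ :: _);
     elim: w hw {IH} => //= [[]] w IHw //= /IHw ->; rewrite size_nseq.
case E: (dec w) => [[p' r']|] //= [<- <-].
by rewrite (IH _ _ E).
Qed.

Lemma mono_eq_dec p r w : (mono p r == w) = (dec w == Some (p, r)).
Proof.
apply/eqP/eqP => [<-|/decK ->]; first exact: dec_mono.
by [].
Qed.

Lemma all_false w : ~~ has id w -> w = nseq (size w) false.
Proof. by elim: w => //= [[]] w IH //= /IH {1}->. Qed.

Lemma mono_S p r : mono p.+1 r = false :: mono p r.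
Proof. by []. Qed.

Lemma mono_rS p r : mono p r.+1 = rcons (mono p r) false.
Proof. by rewrite /mono rcons_cat /= -cats1 -[[:: false]]/(nseq 1 false) -nseqD addn1. Qed.
Lemma mono_r0 p : mono p 0 = rcons (nseq p false) true.
Proof. by rewrite /mono cats1. Qed.

Lemma dec_rcons w : dec (rcons w false) = omap (fun pr => (pr.1, pr.2.+1)) (dec w).
Proof.
elim: w => [|[] w IH] //=.
  by rewrite has_rcons /= size_rcons; case: (has id w).
by rewrite IH; case: (dec w).
Qed.

Section Formulas.
Variable K : comNzRingType.

Lemma coef_sh_nseq j v : coef (shift_word K (nseq j false)) v =
  if has id v then 0 else ('C(j, size v))%:R.
Proof.
elim: j v => [|j IH] v.
  rewrite /= coef_cons coef_nil addr0 /=.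
  case: v => [|b v] /=; first by rewrite bin0.
  by case: b; case: (has id v) => //=; rewrite bin0n.
rewrite -[nseq _ _]/(false :: nseq j false) coef_sh_false.
case: v => [|[] v] /=; rewrite ?IH /= ?add0r ?bin0 //.
by case: (has id v); rewrite ?addr0 // binS natrD addrC.
Qed.

Definition shf (i j : nat) (v : word) : K :=
  match dec v with Some (p, r) => ('C(i, p) * 'C(j, r))%:R | None => 0 end.

Lemma coef_sh_mono i j v : coef (shift_word K (mono i j)) v = shf i j v.
Proof.
rewrite /shf; elim: i v => [|i IH] v.
  rewrite -[mono 0 j]/(true :: nseq j false) coef_sh_true.
  case: v => [|[] v] /=.
  - by [].
  - by rewrite coef_sh_nseq; case: (has id v); rewrite // bin0 mul1n.
  - by case: (dec v) => [[p r]|] //=; rewrite bin0n mul0n.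
rewrite mono_S coef_sh_false.
case: v => [|[] v]; rewrite ?IH /= ?add0r.
- by [].
- by case: (has id v); rewrite //= !bin0.
- case: (dec v) => [[p r]|] /=; rewrite ?addr0 //.
  by rewrite binS mulnDl natrD addrC.
Qed.

Lemma coef_dy_nseq j v : coef (dy_word K (nseq j false)) v =
  if has id v then 0 else if (size v).+1 == j then (j%:R) else 0.
Proof.
elim: j v => [|j IH] v.
  by rewrite /= coef_nil; case: (has id v).
rewrite -[nseq _ _]/(false :: nseq j false) coef_dy_false.
case: v => [|[] v] /=.
- by case: j {IH} => [|j] /=; rewrite ?addr0.
- by rewrite addr0; case: j {IH}.
rewrite IH.
case hv: (has id v).
  rewrite addr0; case: eqP => // E; move: hv.
  by case: j E {IH} => //= j [] <-; rewrite has_nseq andbF.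
rewrite {1}(all_false (negbT hv)).
case: j {IH} => [|j] /=; first by rewrite add0r.
have -> : (false :: nseq j false == false :: nseq (size v) false) = (j == size v).
  rewrite eqseq_cons eqxx /=; apply/eqP/eqP => [E|->] //.
  by rewrite -(size_nseq j false) E size_nseq.
rewrite !eqSS eq_sym; case: (size v == j); rewrite ?addr0 //.
Qed.

Definition dyf (i j : nat) (v : word) : K :=
  match dec v with
  | Some (p, r) => (if (p.+1 == i) && (r == j) then i%:R else 0)
                   + (if (p == i) && (r.+1 == j) then j%:R else 0)
  | None => 0 end.

Lemma coef_dy_mono i j v : coef (dy_word K (mono i j)) v = dyf i j v.
Proof.
rewrite /dyf; elim: i v => [|i IH] v.
  rewrite -[mono 0 j]/(true :: nseq j false) coef_dy_true.
  case: v => [|[] v] /=.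
  - by [].
  - by rewrite coef_dy_nseq; case: (has id v); rewrite //= add0r.
  - by case: (dec v) => [[p r]|] //=; rewrite addr0.
rewrite mono_S coef_dy_false mono_eq_dec.
case: v => [|[] v] /=.
- by rewrite addr0.
- rewrite addr0; case: (has id v) => //=.
  by case: i {IH} => [|i] /=; rewrite ?addr0 //; case: (size v == j).
- rewrite IH; case: (dec v) => [[p r]|] //=; rewrite ?addr0 //.
  have -> : (Some (p.+1, r) == Some (i, j)) = ((p.+1 == i) && (r == j)) by [].
  rewrite !eqSS.
  have [->|ne] := eqVneq i p.+1.
    rewrite /= (ltn_eqF (ltnSn p)) /= !addr0.
    by case: (r == j); rewrite ?addr0.
  by rewrite /= !add0r.
Qed.

Definition ef (n : nat) (v : word) : K :=
  match dec v with
  | Some (p, r) => if (p + r == n)%N then (-1) ^+ p * ('C(n, p))%:R else 0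
  | None => 0 end.

Lemma coef_e n v : coef (e K n) v = ef n v.
Proof.
rewrite /ef; elim: n v => [|n IH] v.
  rewrite /= coef_cons coef_nil addr0 /= -[[:: true]]/(mono 0 0) mono_eq_dec.
  case: (dec v) => [[p r]|] //=.
  have -> : (Some (p, r) == Some (0%N, 0%N)) = ((p == 0%N) && (r == 0%N)) by [].
  by case: p => [|p]; case: r => [|r] //=; rewrite mul1r bin0.
rewrite /= /fadd coef_cat coef_scale.
case D: (dec v) => [[p r]|]; last first.
  have -> : coef (fmul (e K n) (fy K)) v = 0.
    case/lastP: v D => [|v' b] D; first exact: coef_fmul_fy_r_nil.
    rewrite coef_fmul_fy_r; case: b D => // D.
    by rewrite IH; move: D; rewrite dec_rcons; case: (dec v').
  rewrite coef_fmul_letter; case: v D => [|[] v'] D /=; rewrite ?mulr0 ?addr0 //.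
  by rewrite mul1r IH; move: D => /=; case: (dec v') => //; rewrite mulr0 addr0.
have R : coef (fmul (e K n) (fy K)) v = if r is r'.+1 then
    (if (p + r' == n)%N then (-1) ^+ p * ('C(n, p))%:R else 0) else 0.
  rewrite (decK D); case: r {D} => [|r].
    by rewrite mono_r0 coef_fmul_fy_r.
  by rewrite mono_rS coef_fmul_fy_r IH dec_mono.
have L : coef (fmul (fy K) (e K n)) v = if p is p'.+1 then
    (if (p' + r == n)%N then (-1) ^+ p' * ('C(n, p'))%:R else 0) else 0.
  rewrite (decK D) coef_fmul_letter; case: p {D R} => [|p] //=.
  by rewrite mul1r IH dec_mono.
rewrite R L; clear R L D.
case: p => [|p]; case: r => [|r].
- by rewrite mulr0 addr0.
- by rewrite mulr0 addr0 !add0n eqSS !bin0.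
- rewrite !addn0 eqSS add0r; case: eqP => [->|_]; last by rewrite mulr0.
  by rewrite !binn exprS !mulr1 mulN1r.
- rewrite !addSn !addnS !eqSS; case: eqP => _; last by rewrite mulr0 addr0.
  by rewrite binS natrD exprS; ring.
Qed.

End Formulas.

From mathcomp Require Import zify.

Section Lin.
Variable K : comNzRingType.

Lemma sum_pick1 (G : word -> K) (u0 : word) (c : K) s : uniq s -> u0 \in s ->
  \sum_(u <- s) (if u0 == u then c else 0) * G u = c * G u0.
Proof.
move=> us ins.
rewrite (perm_big _ (perm_to_rem ins)) big_cons eqxx big1_seq /= ?addr0 //.
move=> u /= hu; move: hu; rewrite (mem_rem_uniq _ us) inE => /andP [hne _].
by rewrite eq_sym (negbTE hne) mul0r.
Qed.

Lemma sum_coef (G : word -> K) (f : fsum K) s : uniq s -> {subset [seq p.2 | p <- f] <= s} ->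
  \sum_(p <- f) p.1 * G p.2 = \sum_(u <- s) coef f u * G u.
Proof.
move=> us; elim: f => [|p f IH] sub.
  by rewrite big_nil big1_seq // => u _; rewrite coef_nil mul0r.
rewrite big_cons IH; last by move=> u hu; apply: sub; rewrite inE hu orbT.
under [RHS]eq_bigr => u _ do rewrite coef_cons mulrDl.
rewrite big_split /= sum_pick1 //.
by apply: sub; rewrite inE eqxx.
Qed.

Lemma coef_linext_feq h (f g : fsum K) : feq f g -> forall w, coef (linext h f) w = coef (linext h g) w.
Proof.
move=> fg w; rewrite !coef_linext.
pose s := undup [seq p.2 | p <- f ++ g].
rewrite (sum_coef (fun u => coef (h u) w) (s := s)) ?undup_uniq //; last first.
  by move=> u hu; rewrite mem_undup map_cat mem_cat hu.
rewrite (sum_coef (fun u => coef (h u) w) (s := s)) ?undup_uniq //; last first.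
  by move=> u hu; rewrite mem_undup map_cat mem_cat hu orbT.
by apply: eq_bigr => u _; rewrite fg.
Qed.

Lemma pick_nat n k (F : nat -> K) :
  \sum_(0 <= i < n) (if i == k then F i else 0) = if (k < n)%N then F k else 0.
Proof. by rewrite -big_mkcond big_nat1_eq. Qed.

Lemma sign_sq p : (-1) ^+ p * (-1) ^+ p = 1 :> K.
Proof. by rewrite -exprMn mulrNN mulr1 expr1n. Qed.

Lemma alt0 N m : (N <= m)%N ->
  \sum_(0 <= q < m.+1) (-1) ^+ q * ('C(N, q))%:R = (N == 0)%:R :> K.
Proof.
move=> Nm.
rewrite (big_cat_nat _ (n := N.+1)) //= [X in _ + X]big1_seq ?addr0; last first.
  move=> q /andP [_]; rewrite mem_index_iota => /andP [h _].
  by rewrite bin_small // mulr0.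
rewrite big_mkord -expr0n -[0 ^+ N](congr1 (fun x => x ^+ N) (subrr (1 : K))) exprBn.
by apply: eq_bigr => i _; rewrite !expr1n !mulr1 mulr_natr.
Qed.

Lemma alt N m : (N <= m)%N ->
  \sum_(0 <= q < m.+1) (-1) ^+ (m - q) * ('C(N, q))%:R = (-1) ^+ m * (N == 0)%:R :> K.
Proof.
move=> Nm; rewrite -(alt0 Nm) mulr_sumr.
apply: eq_big_nat => q /andP [_ hq].
have -> : (-1) ^+ m = (-1) ^+ (m - q) * (-1) ^+ q :> K by rewrite -exprD subnK.
by rewrite -!mulrA (mulrA ((-1) ^+ q)) sign_sq mul1r.
Qed.

End Lin.

Lemma tri n i p r : (i <= n)%N -> (p + r <= n)%N ->
  ('C(n, i) * ('C(i, p) * 'C(n - i, r)) =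
   (p <= i) * ('C(n, p) * 'C(n - p, r) * 'C(n - p - r, i - p)))%N.
Proof.
move=> hi hpr.
case: (ltnP i p) => hip.
  by rewrite (bin_small hip) /= !muln0 mul0n.
case: (ltnP (n - i) r) => hir.
  rewrite (bin_small hir) !muln0 (@bin_small (n - p - r) (i - p)) ?muln0 //; lia.
rewrite mul1n.
have X0 : (0 < p`! * (i - p)`! * (r`! * (n - i - r)`!))%N.
  by rewrite !muln_gt0 !fact_gt0.
apply/eqP; rewrite -(eqn_pmul2r X0); apply/eqP.
have H1 := bin_fact hi.
have H2 := bin_fact hip.
have H3 := bin_fact hir.
have hpn : (p <= n)%N by lia.
have H4 := bin_fact hpn.
have hr : (r <= n - p)%N by lia.
have H5 := bin_fact hr.
have hm : (i - p <= n - p - r)%N by lia.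
have H6 := bin_fact hm.
have E1 : (n - p - r - (i - p) = n - i - r)%N by lia.
have E2 : (n - p - r = n - p - r)%N by [].
rewrite E1 in H6.
transitivity (n`!).
  rewrite -H1 -H2 -H3. ring.
rewrite -H4 -H5 -H6. ring.
Qed.

Lemma tsum (K : comNzRingType) n p r :
  \sum_(0 <= i < n.+1) (-1) ^+ i * ('C(n, i) * ('C(i, p) * 'C(n - i, r)))%:R
  = if (p + r == n)%N then (-1) ^+ p * ('C(n, p))%:R else 0 :> K.
Proof.
case: (leqP (p + r) n) => hpr; last first.
  have -> : (p + r == n) = false by lia.
  rewrite big1_seq // => i /andP [_]; rewrite mem_index_iota => /andP [_ hi].
  case: (ltnP i p) => hip; first by rewrite (bin_small hip) mul0n muln0 mulr0.
  by rewrite (@bin_small (n - i) r) ?muln0 ?mulr0 //; lia.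
rewrite (eq_big_nat _ _ (F2 := fun i => (-1) ^+ i *
   ((p <= i) * ('C(n, p) * 'C(n - p, r) * 'C(n - p - r, i - p)))%N%:R)); last first.
  by move=> i /andP [_ hi]; rewrite tri //.
rewrite (big_cat_nat _ (n := p)) //=; last by lia.
rewrite big1_seq ?add0r; last first.
  move=> i /andP [_]; rewrite mem_index_iota => /andP [_ hi].
  by rewrite leqNgt hi mul0n mulr0.
rewrite -{1}(add0n p) big_addn.
rewrite (eq_big_nat _ _ (F2 := fun i => ((-1) ^+ p * ('C(n, p) * 'C(n - p, r))%:R)
   * ((-1) ^+ i * ('C(n - p - r, i))%:R))); last first.
  by move=> i _; rewrite leq_addl addnK mul1n natrM exprD; ring.
rewrite -mulr_sumr subSn; last by lia.
rewrite alt0; last by lia.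
case: eqP => E.
  have -> : (p + r == n)%N by lia.
  have -> : (n - p = r)%N by lia.
  by rewrite binn muln1 (_ : true%:R = 1 :> K) ?mulr1.
have -> : (p + r == n)%N = false by lia.
by rewrite (_ : false%:R = 0 :> K) ?mulr0.
Qed.

Section Main.
Variable K : comNzRingType.
Variable n : nat.
Variable a : 'I_n.+1 -> K.
Let L : fsum K := [seq (a i, mono i (n - i)) | i <- enum 'I_n.+1].
Let A (k : nat) : K := a (inord k).

Lemma sum_L (G : word -> K) :
  \sum_(x <- L) x.1 * G x.2 = \sum_(0 <= i < n.+1) A i * G (mono i (n - i)).
Proof.
rewrite big_map big_enum /= big_mkord.
by apply: eq_bigr => i _; rewrite /A inord_val.
Qed.

Lemma coef_L w : coef L w =
  match dec w with Some (p, r) => if (p + r == n)%N then A p else 0 | None => 0 end.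
Proof.
have -> : coef L w = \sum_(x <- L) x.1 * (fun u => if u == w then 1 else 0) x.2.
  by apply: eq_bigr => x _; case: (x.2 == w); rewrite ?mulr1 ?mulr0.
rewrite (sum_L (fun u => if u == w then 1 else 0)).
under eq_big_nat => i _ do rewrite mono_eq_dec.
case: (dec w) => [[p r]|]; last by rewrite big1_seq // => i _; rewrite mulr0.
rewrite (eq_big_nat _ _ (F2 := fun i => if i == p then (if (r == n - i)%N then A i else 0) else 0)); last first.
  move=> i _.
  have -> : (Some (p, r) == Some (i, (n - i)%N)) = ((p == i) && (r == n - i)%N) by [].
  by rewrite eq_sym; case: (i == p); case: (r == n - i)%N; rewrite /= ?mulr1 ?mulr0.
rewrite pick_nat.
case: (ltnP p n.+1) => hp.
  by have -> : (r == n - p)%N = (p + r == n)%N by lia.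
by have -> : (p + r == n)%N = false by lia.
Qed.

Lemma coef_shL w : coef (shiftY L) w =
  match dec w with
  | Some (p, r) => \sum_(0 <= i < n.+1) A i * ('C(i, p) * 'C(n - i, r))%:R
  | None => 0 end.
Proof.
rewrite /shiftY coef_linext (sum_L (fun u => coef (shift_word K u) w)).
under eq_big_nat => i _ do rewrite coef_sh_mono /shf.
by case: (dec w) => [[p r]|] //; rewrite big1_seq // => i _; rewrite mulr0.
Qed.

Lemma coef_dyL w : coef (dy L) w =
  match dec w with
  | Some (p, r) => if (p.+1 + r == n)%N then A p.+1 * (p.+1)%:R + A p * (n - p)%N%:R else 0
  | None => 0 end.
Proof.
rewrite /dy coef_linext (sum_L (fun u => coef (dy_word K u) w)).
under eq_big_nat => i _ do rewrite coef_dy_mono /dyf.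
case: (dec w) => [[p r]|]; last by rewrite big1_seq // => i _; rewrite mulr0.
rewrite (eq_big_nat _ _ (F2 := fun i =>
   (if i == p.+1 then (if (r == n - i)%N then A i * i%:R else 0) else 0)
 + (if i == p then (if (r.+1 == n - i)%N then A i * (n - i)%N%:R else 0) else 0))); last first.
  move=> i _; rewrite mulrDr; congr (_ + _).
    by rewrite eq_sym; case: (i == p.+1); case: (r == n - i)%N; rewrite /= ?mulr0.
  by rewrite eq_sym; case: (i == p); case: (r.+1 == n - i)%N; rewrite /= ?mulr0.
rewrite big_split /=.
rewrite !pick_nat.
case: (ltnP p.+1 n.+1) => hp.
  have -> : (r == n - p.+1)%N = (p.+1 + r == n)%N by lia.
  have -> : (p < n.+1)%N by lia.
  have -> : (r.+1 == n - p)%N = (p.+1 + r == n)%N by lia.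
  by case: (p.+1 + r == n)%N; rewrite ?addr0.
have -> : (p.+1 + r == n)%N = false by lia.
have -> : (r.+1 == n - p)%N = false by lia.
by case: (p < n.+1)%N; rewrite addr0.
Qed.

End Main.

Lemma sgn_aux (K : comNzRingType) (x : K) p r :
  (-1) ^+ r * x = (-1) ^+ (p + r) * ((-1) ^+ p * x).
Proof.
have -> : (-1) ^+ (p + r) * ((-1) ^+ p * x) = ((-1) ^+ p * (-1) ^+ p) * ((-1) ^+ r * x) :> K.
  by rewrite exprD; ring.
by rewrite sign_sq mul1r.
Qed.

Unset Implicit Arguments. Set Strict Implicit.

Theorem proposition2p4 (K : idomainType)
  (Kinf : forall s : seq K, exists k : K, k \notin s)
  (n : nat) (alpha : fsum K) (Halpha : in_W n alpha) :
  (is_zero (Delta alpha) <-> exists c : K, feq alpha (fscale c (e K n)))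
  /\
  ([pchar K] =i pred0 ->
     (is_zero (dy alpha) <-> exists c : K, feq alpha (fscale c (e K n)))).
Proof.
have [a Ha] := Halpha.
pose L := [seq (a i, mono i (n - i)) | i <- enum 'I_n.+1].
pose A := fun k : nat => a (inord k).
have cA : forall w, coef alpha w = match dec w with
    Some (p, r) => if (p + r == n)%N then A p else 0 | None => 0 end.
  by move=> w; rewrite Ha coef_L.
have cD : forall w, coef (Delta alpha) w = match dec w with
    Some (p, r) => \sum_(0 <= i < n.+1) A i * ('C(i, p) * 'C(n - i, r))%:R
                    - (if (p + r == n)%N then A p else 0)
  | None => 0 end.
  move=> w; rewrite /Delta /fadd coef_cat coef_scale cA.
  have -> : coef (shiftY alpha) w = coef (shiftY L) w := coef_linext_feq _ Ha w.
  rewrite coef_shL.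
  case: (dec w) => [[p r]|]; first by rewrite mulN1r.
  by rewrite mulr0 add0r.
have cdy : forall w, coef (dy alpha) w = match dec w with
  | Some (p, r) => if (p.+1 + r == n)%N then A p.+1 * (p.+1)%:R + A p * (n - p)%N%:R else 0
  | None => 0 end.
  move=> w.
  have -> : coef (dy alpha) w = coef (dy L) w := coef_linext_feq _ Ha w.
  by rewrite coef_dyL.
have ce : forall c w, coef (fscale c (e K n)) w = c * ef K n w.
  by move=> c w; rewrite coef_scale coef_e.
have AcOf : forall c, feq alpha (fscale c (e K n)) ->
    forall p, (p <= n)%N -> A p = c * ((-1) ^+ p * ('C(n, p))%:R).
  move=> c Hc p hp; move: (Hc (mono p (n - p))); rewrite cA ce /ef dec_mono.
  have -> : (p + (n - p) == n)%N by lia.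
  by [].

split.
- split.
  + move=> Hz.
    have HS : forall p r, \sum_(0 <= i < n.+1) A i * ('C(i, p) * 'C(n - i, r))%:R
                = if (p + r == n)%N then A p else 0.
      move=> p r; move: (Hz (mono p r)); rewrite cD dec_mono => /eqP.
      by rewrite subr_eq0 => /eqP.
    have Ak : forall k, (k <= n)%N -> A k = (-1) ^+ (n - k) * ('C(n, k))%:R * A n.
      move=> k hk; set m := (n - k)%N.
      have E1 : \sum_(0 <= q < m.+1) (-1) ^+ (m - q) *
          (\sum_(0 <= i < n.+1) A i * ('C(i, k) * 'C(n - i, q))%:R) = A k.
        under eq_big_nat => q _ do rewrite HS.
        rewrite (eq_big_nat _ _ (F2 := fun q => if q == m then A k else 0)); last first.
          move=> q /andP [_ hq]; have -> : (k + q == n)%N = (q == m) by lia.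
          by case: eqP => [->|_]; rewrite ?subnn ?expr0 ?mul1r ?mulr0.
        by rewrite pick_nat ltnSn.
      have E2 : \sum_(0 <= q < m.+1) (-1) ^+ (m - q) *
          (\sum_(0 <= i < n.+1) A i * ('C(i, k) * 'C(n - i, q))%:R)
          = (-1) ^+ m * ('C(n, k))%:R * A n.
        under eq_big_nat => q _ do rewrite mulr_sumr.
        rewrite exchange_big /=.
        rewrite (eq_big_nat _ _ (F2 := fun i => if i == n then (-1) ^+ m * ('C(n, k))%:R * A n else 0)); last first.
          move=> i /andP [_ hi].
          rewrite (eq_big_nat _ _ (F2 := fun q => (A i * ('C(i, k))%:R) * ((-1) ^+ (m - q) * ('C(n - i, q))%:R))); last first.
            by move=> q _; rewrite natrM; ring.
          rewrite -mulr_sumr.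
          case: (ltnP i k) => hik.
            rewrite bin_small // mulr0 mul0r.
            by have -> : (i == n) = false by lia.
          rewrite alt; last by lia.
          case: (eqVneq i n) => [->|ne].
            by rewrite subnn (_ : (0 == 0)%N%:R = 1 :> K) //; ring.
          have -> : (n - i == 0)%N = false by lia.
          by rewrite (_ : false%:R = 0 :> K) // !mulr0.
        by rewrite pick_nat ltnSn.
      by rewrite -E1 E2.
    exists ((-1) ^+ n * A n).
    move=> w; rewrite cA ce /ef; case: (dec w) => [[p r]|]; last by rewrite mulr0.
    case: eqP => [E|_]; last by rewrite mulr0.
    rewrite Ak; last by lia.
    have -> : (n - p = r)%N by lia.
    by rewrite -mulrA (sgn_aux _ p r) E; ring.
  + case => c Hc.
    have Ac := AcOf c Hc.
    move=> w; rewrite cD; case: (dec w) => [[p r]|] //.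
    rewrite (eq_big_nat _ _ (F2 := fun i => c * ((-1) ^+ i * ('C(n, i) * ('C(i, p) * 'C(n - i, r)))%:R))); last first.
      move=> i /andP [_ hi]; rewrite Ac; last by lia.
      by rewrite !natrM; ring.
    rewrite -mulr_sumr tsum.
    case: eqP => [E|_]; last by rewrite mulr0 subr0.
    by rewrite Ac ?subrr //; lia.
- move=> ch; have ch0 := (pcharf0P _).1 ch.
  split.
  + move=> Hz.
    have Hrec : forall p, (p.+1 <= n)%N -> A p.+1 * (p.+1)%:R + A p * (n - p)%N%:R = 0.
      move=> p hp; move: (Hz (mono p (n - p.+1))); rewrite cdy dec_mono.
      by have -> : (p.+1 + (n - p.+1) == n)%N by lia.
    have Ak : forall k, (k <= n)%N -> A k = A 0 * ((-1) ^+ k * ('C(n, k))%:R).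
      elim => [|k IH] hk; first by rewrite expr0 mul1r bin0 mulr1.
      have h := Hrec k hk; rewrite IH in h; last by lia.
      apply: (mulIf (x := (k.+1)%:R)); first by rewrite ch0.
      have hb : ('C(n, k.+1))%:R * (k.+1)%:R = (n - k)%N%:R * ('C(n, k))%:R :> K.
        by rewrite -!natrM mulnC mul_bin_left.
      transitivity (- (A 0 * ((-1) ^+ k * ('C(n, k))%:R)) * (n - k)%N%:R).
        by move/eqP: h; rewrite addr_eq0 => /eqP ->; rewrite mulNr.
      have -> : A 0 * ((-1) ^+ k.+1 * ('C(n, k.+1))%:R) * (k.+1)%:R
              = - (A 0 * (-1) ^+ k) * (('C(n, k.+1))%:R * (k.+1)%:R) by rewrite exprS; ring.
      by rewrite hb; ring.
    exists (A 0).
    move=> w; rewrite cA ce /ef; case: (dec w) => [[p r]|]; last by rewrite mulr0.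
    case: eqP => [E|_]; last by rewrite mulr0.
    by rewrite Ak //; lia.
  + case => c Hc.
    have Ac := AcOf c Hc.
    move=> w; rewrite cdy; case: (dec w) => [[p r]|] //.
    case: eqP => [E|_] //.
    rewrite !Ac; try lia.
    have hb : (p.+1)%:R * ('C(n, p.+1))%:R = (n - p)%N%:R * ('C(n, p))%:R :> K.
      by rewrite -!natrM mul_bin_left.
    transitivity (c * (-1) ^+ p * ((n - p)%N%:R * ('C(n, p))%:R - (p.+1)%:R * ('C(n, p.+1))%:R)).
      by rewrite exprS; ring.
    by rewrite hb subrr mulr0.
Qed.
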